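(* Let $S$ be an $a$-cap free and $b$-cup free configuration with a fixed slope labeling $s$, and let $\alpha_i(p)$ ($p \in S$, $1 \le i \le a-2$) be its $\alpha$-statistic. Then: (1) for every point $p$, $1 \leq \alpha_1(p) \leq \alpha_2(p) \leq \cdots \leq \alpha_{a-2}(p) \leq b-1$; consequently $\alpha = (\alpha_1,\dots,\alpha_{a-2})$ is a map from $S$ to $T_{a,b} = \{(x_1,\dots,x_{a-2}) \in \mathbb{N}^{a-2} : 1 \le x_1 \le \cdots \le x_{a-2} \le b-1\}$; (2) for any two points $x<y$ of $S$ such that $s(xy)=i$, we have $\alpha_i(x) < \alpha_i(y)$; in particular the map $\alpha$ is injective.
   Context: A configuration is a finite set $S$ of points with a linear order $<$ and, for every $3$-element subset, an arbitrary assignment declaring it either a cap or a cup. Points $x_1<\cdots<x_a$ form an $a$-cup (resp. $a$-cap) if every consecutive triple $\{x_{i-1},x_i,x_{i+1}\}$, $1<i<a$, is assigned cup (resp. cap); $1$- and $2$-element sets are both caps and cups. The length (size) of a cup is its number of points; a cup $x_1\cdots x_a$ with $a\ge2$ ends with the point $x_a$ and the edge $x_{a-1}x_a$. $S$ is $a$-cap free (resp. $b$-cup free) if it contains no $a$-cap (resp. $b$-cup). An edge is a pair $x<y$, written $xy$. A slope labeling of an $a$-cap free configuration $S$ is an assignment of an integer $s(xy)\in\{1,\dots,a-2\}$ to every edge such that for any $x<y<z$, $s(xy)\le s(yz)$ implies $\{x,y,z\}$ is a $3$-cup. The $\alpha$-statistic: for $p \in S$ and $1\le i\le a-2$, $\alpha_i(p)$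 is the maximum length of a cup that ends with the point $p$ and with an edge of label $\le i$; if there is no such cup, $\alpha_i(p)=1$. *)

(* Defs.v *)
From mathcomp Require Import all_boot all_order.
Set Implicit Arguments. Unset Strict Implicit. Unset Printing Implicit Defensive.

(* A configuration on n points: the points are 'I_n with their natural
   linear order.  [cup x y z] (for x < y < z) says the triple {x,y,z} is a
   cup; otherwise it is a cap.  Values of [cup] on non-increasing triples
   are irrelevant. *)

Section Config.
Variable n : nat.
Variable cup : 'I_n -> 'I_n -> 'I_n -> bool.

Fixpoint triples_ok (P : 'I_n -> 'I_n -> 'I_n -> bool) (s : seq 'I_n) : bool :=
  match s with
  | x :: ((y :: z :: _) as t) => P x y z && triples_ok P t
  | _ => true
  end.

Definition pts (A : {set 'I_n}) : seq 'I_n :=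
  sort (fun x y : 'I_n => x <= y) (enum A).

Definition is_cup (A : {set 'I_n}) : bool := triples_ok cup (pts A).
Definition is_cap (A : {set 'I_n}) : bool :=
  triples_ok (fun x y z => ~~ cup x y z) (pts A).

Definition cap_free (a : nat) : Prop :=
  forall A : {set 'I_n}, is_cap A -> #|A| <> a.
Definition cup_free (b : nat) : Prop :=
  forall A : {set 'I_n}, is_cup A -> #|A| <> b.

Definition slope_labeling (a : nat) (s : 'I_n -> 'I_n -> nat) : Prop :=
  (forall x y : 'I_n, x < y -> 1 <= s x y <= a - 2) /\
  (forall x y z : 'I_n, x < y -> y < z -> s x y <= s y z -> cup x y z).

Definition ends_with (s : 'I_n -> 'I_n -> nat) (i : nat) (p : 'I_n)
    (A : {set 'I_n}) : bool :=
  match rev (pts A) with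
  | p' :: q :: _ => (p' == p) && (s q p <= i)
  | _ => false
  end.

Definition alpha (s : 'I_n -> 'I_n -> nat) (i : nat) (p : 'I_n) : nat :=
  maxn 1 (\max_(A : {set 'I_n} | is_cup A && ends_with s i p A) #|A|).

End Config.

(* Main.v *)
Require Import Defs.
From mathcomp Require Import all_boot all_order.

Section Aux.
Variable n : nat.
Definition ltO := fun x y : 'I_n => x < y.
Definition leO := fun x y : 'I_n => x <= y.

Lemma ltO_trans : transitive ltO.
Proof. move=> y x z; rewrite /ltO; exact: ltn_trans. Qed.
Lemma ltO_irr : irreflexive ltO.
Proof. move=> x; rewrite /ltO ltnn. done. Qed.

Lemma lt_of_le_uniq (s : seq 'I_n) : sorted leO s -> uniq s -> sorted ltO s.
Proof.
move=> H1 H2.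
have: sorted ltn (map val s).
  by rewrite ltn_sorted_uniq_leq (map_inj_uniq val_inj) H2 sorted_map.
by rewrite sorted_map.
Qed.

Lemma pts_sorted (A : {set 'I_n}) : sorted ltO (pts A).
Proof.
apply: lt_of_le_uniq; first by apply: sort_sorted => x y; exact: leq_total.
by rewrite sort_uniq enum_uniq.
Qed.

Lemma mem_pts (A : {set 'I_n}) x : (x \in pts A) = (x \in A).
Proof. by rewrite mem_sort mem_enum. Qed.

Lemma size_pts (A : {set 'I_n}) : size (pts A) = #|A|.
Proof. by rewrite size_sort cardE. Qed.

Lemma pts_set (l : seq 'I_n) : sorted ltO l -> pts [set z in l] = l.
Proof.
move=> H; apply: (irr_sorted_eq ltO_trans ltO_irr) => //.
  exact: pts_sorted.
by move=> x; rewrite mem_pts inE.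
Qed.

Lemma triples_take P (l : seq 'I_n) k :
  triples_ok P l -> triples_ok P (take k l).
Proof.
elim: l k => [|x l IH] [|k] //= H.
case: l IH H => [|y l] IH H //=; case: k => [|k] //=.
case: l IH H => [|z l] IH H //=; case: k => [|k] //=.
move/andP: H => [Hp Ht]; rewrite Hp /=.
by have := IH k.+2 Ht.
Qed.

Lemma triples_rcons P (l : seq 'I_n) w x y :
  triples_ok P (rcons (rcons l w) x) -> P w x y ->
  triples_ok P (rcons (rcons (rcons l w) x) y).
Proof.
elim: l => [|u l IH] /=; first by move=> _ ->.
case: l IH => [|v l] IH /=.
  by move/andP=> [-> _] /= ->.
case: l IH => [|t l] IH /=.
  by move/andP=> [-> H] Hp /=; have := IH H Hp.
by move/andP=> [-> H] Hp /=; have := IH H Hp.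
Qed.

Lemma sorted_rcons2 (e : rel 'I_n) (l : seq 'I_n) x y :
  sorted e (rcons (rcons l x) y) = sorted e (rcons l x) && e x y.
Proof.
case: l => [|h t] /=; first by rewrite andbT.
by rewrite rcons_path last_rcons.
Qed.

Lemma ends_withP (s : 'I_n -> 'I_n -> nat) i p (A : {set 'I_n}) :
  ends_with s i p A -> exists l w, pts A = rcons (rcons l w) p /\ s w p <= i.
Proof.
rewrite /ends_with; case E: (rev (pts A)) => [|p' [|q r]] //.
move/andP=> [/eqP Ep H]; exists (rev r), q; split => //.
by rewrite -(revK (pts A)) E -Ep !rev_cons.
Qed.

Lemma ends_with_mono (s : 'I_n -> 'I_n -> nat) i j p (A : {set 'I_n}) :
  i <= j -> ends_with s i p A -> ends_with s j p A.
Proof.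
move=> Hij; rewrite /ends_with; case: (rev (pts A)) => [|p' [|q r]] //.
by move/andP=> [-> H] /=; apply: leq_trans Hij.
Qed.

Lemma cup_bound (cup : 'I_n -> 'I_n -> 'I_n -> bool) b : cup_free cup b -> forall A, is_cup cup A -> #|A| < b.
Proof.
move=> Hf A HA; rewrite ltnNge; apply/negP => Hb.
set l := take b (pts A).
have Hs : sorted ltO l by apply: take_sorted; exact: pts_sorted.
apply: (Hf [set z in l]).
  by rewrite /is_cup pts_set //; apply: triples_take.
by rewrite -size_pts pts_set // size_takel // size_pts.
Qed.


Lemma alpha_step (cup : 'I_n -> 'I_n -> 'I_n -> bool) a (s : 'I_n -> 'I_n -> nat)
  (x y : 'I_n) : slope_labeling cup a s -> x < y ->
  (2 <= alpha cup s (s x y) y) /\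
  (forall A, is_cup cup A -> ends_with s (s x y) x A ->
     #|A|.+1 <= alpha cup s (s x y) y).
Proof.
move=> [_ Hsl] Hxy.
have Hbig : forall B : {set 'I_n}, is_cup cup B -> ends_with s (s x y) y B ->
    #|B| <= alpha cup s (s x y) y.
  move=> B HB HE; rewrite /alpha; apply: leq_trans (leq_maxr _ _).
  by apply: leq_bigmax_cond; rewrite HB HE.
split.
  have Hs : sorted ltO [:: x; y] by rewrite /= andbT.
  have -> : 2 = #|[set z in [:: x; y]]| by rewrite -size_pts pts_set.
  by apply: Hbig; rewrite /is_cup /ends_with pts_set //= eqxx leqnn.
move=> A HA HE; have [l [w [Ep Hw]]] := @ends_withP _ _ _ _ HE.
have HsA := pts_sorted A; rewrite Ep in HsA.
have Hwx : w < x by move: HsA; rewrite sorted_rcons2 => /andP[].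
have Hs : sorted ltO (rcons (pts A) y) by rewrite Ep sorted_rcons2 HsA.
have -> : #|A|.+1 = #|[set z in rcons (pts A) y]|.
  by rewrite -[RHS]size_pts pts_set // size_rcons size_pts.
apply: Hbig; rewrite /is_cup /ends_with pts_set //.
  rewrite Ep; apply: triples_rcons; first by move: HA; rewrite /is_cup Ep.
  by apply: Hsl.
by rewrite Ep !rev_rcons eqxx leqnn.
Qed.

End Aux.

Theorem theorem3p6 (n a b : nat) (cup : 'I_n -> 'I_n -> 'I_n -> bool)
    (s : 'I_n -> 'I_n -> nat) :
  cap_free cup a -> cup_free cup b -> slope_labeling cup a s ->
  (forall p : 'I_n,
      (forall i, 1 <= i <= a - 2 -> 1 <= alpha cup s i p <= b - 1) /\
      (forall i, 1 <= i -> i < a - 2 -> alpha cup s i p <= alpha cup s i.+1 p))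
  /\ (forall x y : 'I_n, x < y -> alpha cup s (s x y) x < alpha cup s (s x y) y)
  /\ (forall x y : 'I_n,
        (forall i, 1 <= i <= a - 2 -> alpha cup s i x = alpha cup s i y) -> x = y).
Proof.
move=> _ Hcf Hsl.
have P2 : forall x y : 'I_n, x < y -> alpha cup s (s x y) x < alpha cup s (s x y) y.
  move=> x y Hxy; have [H2 HA] := @alpha_step _ _ _ _ _ _ Hsl Hxy.
  have Hpos : 0 < alpha cup s (s x y) y by apply: leq_trans H2.
  rewrite /alpha -/(alpha cup s (s x y) y) -(prednK Hpos) ltnS geq_max.
  rewrite -ltnS (prednK Hpos) (leq_trans _ H2) //=.
  apply/bigmax_leqP => A /andP[HcA HeA].
  by rewrite -ltnS (prednK Hpos); apply: HA.
split; last split => //.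
  move=> p; split.
    move=> i _; rewrite leq_maxl /= geq_max.
    have H1 : 1 < b.
      have Hs : sorted (@ltO n) [:: p] by [].
      have := @cup_bound _ _ _ Hcf [set z in [:: p]].
      by rewrite -size_pts pts_set //; apply; rewrite /is_cup pts_set.
    have -> : 1 <= b - 1 by rewrite subn_gt0.
    apply/bigmax_leqP => A /andP[HcA _].
    have := @cup_bound _ _ _ Hcf _ HcA; case: b {Hcf H1} => // b'.
    by rewrite subSS subn0.
  move=> i _ _; rewrite geq_max leq_maxl /=.
  apply/bigmax_leqP => A /andP[HcA HeA]; apply: leq_trans (leq_maxr _ _).
  apply: leq_bigmax_cond.
  by rewrite HcA (@ends_with_mono _ _ _ _ _ _ (leqnSn i) HeA).
move=> x y H; apply/val_inj => /=.
have [Hsr _] := Hsl.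
case: (ltngtP x y) => // Hxy.
  have := P2 x y Hxy; rewrite H ?ltnn //; exact: Hsr.
have := P2 y x Hxy; rewrite H ?ltnn //; exact: Hsr.
Qed.
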